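(* Let $\mathcal{H}$ be a complex Hilbert space of finite dimension $n\ge 2$, let $\mathcal{B}(\mathcal{H})_{\mathrm{sa}}$ be the real vector space of selfadjoint operators on $\mathcal{H}$, and for $k\in\mathbb{N}$ let $\mathcal{P}_k(\mathcal{H})$ denote the set of orthogonal projections on $\mathcal{H}$ of rank $k$. Let $k<n$ and let $\mathcal{L}\colon\mathcal{B}(\mathcal{H})_{\mathrm{sa}}\to\mathcal{B}(\mathcal{H})_{\mathrm{sa}}$ be a linear map with $\mathcal{L}(\mathcal{P}_k(\mathcal{H}))=\mathcal{P}_k(\mathcal{H})$. Then $\mathcal{L}$ maps $\mathcal{B}(\mathcal{H})_{\mathrm{sa}}$ bijectively onto itself. *)

(* Defs.v *)
From HB Require Import structures.
From mathcomp Require Import all_boot all_order all_algebra.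
From mathcomp Require Import reals.
From mathcomp Require Export complex.
Set Implicit Arguments. Unset Strict Implicit. Unset Printing Implicit Defensive.
Import Order.TTheory GRing.Theory Num.Theory.
Local Open Scope ring_scope.
Local Open Scope complex_scope.

Definition adjmx (R : realType) (n : nat) (A : 'M[R[i]]_n) : 'M[R[i]]_n :=
  (map_mx (@conjc R) A)^T.

Definition selfadj (R : realType) (n : nat) (A : 'M[R[i]]_n) : Prop :=
  adjmx A = A.

Definition proj_rank (R : realType) (n k : nat) (P : 'M[R[i]]_n) : Prop :=
  selfadj P /\ P *m P = P /\ \rank P = k.

(* L is a real-linear map B(H)_sa -> B(H)_sa (its values outside B(H)_sa are irrelevant). *)
Definition sa_linear (R : realType) (n : nat) (L : 'M[R[i]]_n -> 'M[R[i]]_n) : Prop :=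
  (forall A, selfadj A -> selfadj (L A)) /\
  (forall (a b : R) A B, selfadj A -> selfadj B ->
     L ((a%:C) *: A + (b%:C) *: B) = (a%:C) *: L A + (b%:C) *: L B).

(* Main.v *)
Require Import Defs.
From HB Require Import structures.
From mathcomp Require Import all_boot all_order all_algebra.
From mathcomp Require Import reals complex.
From mathcomp.algebra_tactics Require Import ring.
From mathcomp Require Import zify.
Import Order.TTheory GRing.Theory Num.Theory.
Local Open Scope ring_scope.
Local Open Scope complex_scope.
Set Implicit Arguments. Unset Strict Implicit. Unset Printing Implicit Defensive.


Definition adjm (R : realType) m n (A : 'M[R[i]]_(m,n)) : 'M[R[i]]_(n,m) :=
  (map_mx (@conjc R) A)^T.

Lemma adjmE (R : realType) m n (A : 'M[R[i]]_(m,n)) i j : adjm A i j = conjc (A j i).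
Proof. by rewrite !mxE. Qed.
Lemma adjmD (R : realType) m n (A B : 'M[R[i]]_(m,n)) : adjm (A + B) = adjm A + adjm B.
Proof. by apply/matrixP=> i j; rewrite !mxE rmorphD. Qed.
Lemma adjmZ (R : realType) m n c (A : 'M[R[i]]_(m,n)) : adjm (c *: A) = conjc c *: adjm A.
Proof. by apply/matrixP=> i j; rewrite !mxE rmorphM. Qed.
Lemma adjmN (R : realType) m n (A : 'M[R[i]]_(m,n)) : adjm (- A) = - adjm A.
Proof. by apply/matrixP=> i j; rewrite !mxE rmorphN. Qed.
Lemma adjm0 (R : realType) m n : adjm (0 : 'M[R[i]]_(m,n)) = 0.
Proof. by apply/matrixP=> i j; rewrite !mxE rmorph0. Qed.
Lemma adjmK (R : realType) m n (A : 'M[R[i]]_(m,n)) : adjm (adjm A) = A.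
Proof. by apply/matrixP=> i j; rewrite !mxE conjcK. Qed.
Lemma adjmM (R : realType) m n p (A : 'M[R[i]]_(m,n)) (B : 'M[R[i]]_(n,p)) :
  adjm (A *m B) = adjm B *m adjm A.
Proof. by rewrite /adjm map_mxM trmx_mul. Qed.
Lemma conjc_i (R : realType) : conjc ('i%C : R[i]) = - 'i%C.
Proof. by apply/eqP; rewrite eq_complex /= oppr0 !eqxx. Qed.
Lemma i2 (R : realType) : ('i%C : R[i]) * 'i%C = -1.
Proof. by rewrite -expr2 sqr_i. Qed.

Lemma sum_delta (R : realType) n (F : 'I_n -> R[i]) x : \sum_r F r * (r == x)%:R = F x.
Proof.
rewrite (bigD1 x) //= eqxx mulr1 big1 ?addr0 // => r /negPf ->; by rewrite mulr0.
Qed.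
Lemma sum_delta' (R : realType) n (F : 'I_n -> R[i]) x : \sum_r (x == r)%:R * F r = F x.
Proof.
rewrite (bigD1 x) //= eqxx mul1r big1 ?addr0 // => r; rewrite eq_sym => /negPf ->; by rewrite mul0r.
Qed.
Lemma conjcM' (R : realType) (x y : R[i]) : conjc (x * y) = conjc x * conjc y.
Proof. exact: rmorphM. Qed.
Lemma conjcD' (R : realType) (x y : R[i]) : conjc (x + y) = conjc x + conjc y.
Proof. exact: rmorphD. Qed.
Lemma rc_half (R : realType) (x : R) : (x / 2)%:C = x%:C / 2 :> R[i].
Proof. by rewrite rmorphM fmorphV rmorph_nat. Qed.
Lemma conjcN' (R : realType) (x : R[i]) : conjc (- x) = - conjc x.
Proof. exact: rmorphN. Qed.


Definition Pmat (R : realType) n k (s : 'I_k -> 'I_n) c0 (u : 'cV[R[i]]_n) : 'M[R[i]]_n :=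
  \sum_(c | c != c0) delta_mx (s c) (s c) + u *m adjm u.

Lemma proj_P (R : realType) n k (s : 'I_k -> 'I_n) c0 (u : 'cV[R[i]]_n) :
  (forall a b, a != c0 -> b != c0 -> s a = s b -> a = b) ->
  (forall c, c != c0 -> u (s c) 0 = 0) -> adjm u *m u = 1%:M ->
  proj_rank k (Pmat s c0 u).
Proof.
move=> sinj u0 un.
pose V : 'M[R[i]]_(n,k) := \matrix_(r, c) if c == c0 then u r 0 else (r == s c)%:R.
have h1 : adjm V *m V = 1%:M.
  apply/matrixP=> a b; rewrite !mxE.
  under eq_bigr do rewrite adjmE /V !mxE.
  have [ea|ha] := eqVneq a c0; have [eb|hb] := eqVneq b c0.
  - rewrite ea eb eqxx; move/matrixP: un => /(_ 0 0); rewrite !mxE => <-.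
    by apply: eq_bigr => r _; rewrite !mxE.
  - rewrite ea eq_sym (negPf hb) /= sum_delta u0 ?rmorph0 //.
  - rewrite eb (negPf ha) /=.
    under eq_bigr do rewrite conjc_nat eq_sym.
    by rewrite sum_delta' u0.
  - under eq_bigr do rewrite conjc_nat.
    rewrite sum_delta; suff -> : (s b == s a) = (a == b) by [].
    apply/idP/idP => [/eqP/esym/sinj|/eqP->//].
    by move=> /(_ ha hb) ->.
have h2 : V *m adjm V = Pmat s c0 u.
  apply/matrixP=> r t; rewrite /Pmat !mxE.
  under eq_bigr do rewrite adjmE /V !mxE.
  rewrite summxE big_ord1 !mxE.
  rewrite (bigD1 c0) //= eqxx addrC; congr (_ + _).
  apply: eq_bigr => c hc; rewrite !mxE (negPf hc) conjc_nat -natrM mulnb.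
  by [].
have hsa : selfadj (Pmat s c0 u).
  by rewrite /selfadj -h2; change (adjm (V *m adjm V) = V *m adjm V); rewrite adjmM adjmK.
split => //; split.
  by rewrite -h2 mulmxA -(mulmxA V) h1 mulmx1.
apply/eqP; rewrite eqn_leq; apply/andP; split.
  by rewrite -h2 (leq_trans (mxrankM_maxl _ _)) ?rank_leq_col.
have e : (\rank (adjm V *m (V *m adjm V) *m V) = k)%N.
  by rewrite mulmxA h1 mul1mx h1 mxrank1.
rewrite -[X in (X <= _)%N]e.
by rewrite h2 (leq_trans (mxrankM_maxl _ _)) ?mxrankM_maxr.
Qed.


Lemma exists_sigma n k (i j : 'I_n) : i != j -> (0 < k)%N -> (k < n)%N ->
  exists (s : 'I_k -> 'I_n) (c0 : 'I_k), s c0 = i /\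
    (forall c, c != c0 -> s c != i /\ s c != j) /\ (forall a b, s a = s b -> a = b).
Proof.
move=> hij k0 kn.
pose A := [set r : 'I_n | (r != i) && (r != j)].
pose l := enum A.
have hsz : (k.-1 <= size l)%N.
  rewrite /l -cardE.
  have : #|A| = (n - 2)%N.
    have -> : A = ~: [set i; j].
      by apply/setP => r; rewrite !inE negb_or.
    by rewrite cardsCs setCK cards2 hij card_ord.
  move=> ->; lia.
have inl x : x \in l -> x != i /\ x != j.
  by rewrite /l mem_enum inE => /andP.
pose s (c : 'I_k) := if (c : nat) == 0%N then i else nth i l (c.-1).
have hs (c : 'I_k) : (c : nat) != 0%N -> s c \in l.
  move=> hc; rewrite /s (negPf hc) mem_nth //.
  have := ltn_ord c; move: hc hsz; case: c => [m hm] /= /eqP; lia.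
exists s, (Ordinal k0); split; first by [].
split.
  move=> c hc; apply: inl; apply: hs.
  by apply: contra hc => /eqP hc; apply/eqP/val_inj.
move=> a b.
have [a0|a0] := eqVneq (a : nat) 0%N; have [b0|b0] := eqVneq (b : nat) 0%N.
- by move=> _; apply: val_inj => /=; rewrite a0 b0.
- move=> e; have := inl _ (hs _ b0); rewrite -e /s a0 eqxx.
  by rewrite eqxx; case.
- move=> e; have := inl _ (hs _ a0); rewrite e /s b0 eqxx.
  by rewrite eqxx; case.
- rewrite /s (negPf a0) (negPf b0) => /eqP.
  rewrite nth_uniq ?enum_uniq //; last 2 first.
  + have := ltn_ord a; move: a0 hsz; case: a => [m hm] /= /eqP; lia.
  + have := ltn_ord b; move: b0 hsz; case: b => [m hm] /= /eqP; lia.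
  move=> /eqP e; apply: val_inj => /=; move: a0 b0 e; case: a => [m hm]; case: b => [m' hm'] /= /eqP ? /eqP ?; lia.
Qed.


Definition Gimg (R : realType) n (L : 'M[R[i]]_n -> 'M[R[i]]_n) (B : 'M[R[i]]_n) :=
  exists A, selfadj A /\ L A = B.

Lemma sa0 (R : realType) n : selfadj (0 : 'M[R[i]]_n).
Proof. exact: (adjm0 R n n). Qed.

Lemma saL (R : realType) n (A B : 'M[R[i]]_n) (a b : R) :
  selfadj A -> selfadj B -> selfadj (a%:C *: A + b%:C *: B).
Proof.
rewrite /selfadj => hA hB.
change (adjm (a%:C *: A + b%:C *: B) = a%:C *: A + b%:C *: B).
rewrite adjmD !adjmZ !conjc_real.
by change (a%:C *: adjmx A + b%:C *: adjmx B = a%:C *: A + b%:C *: B); rewrite hA hB.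
Qed.

Lemma rc1 (R : realType) : (1 : R)%:C = 1 :> R[i].
Proof. exact: rmorph1. Qed.
Lemma rcN1 (R : realType) : (-1 : R)%:C = -1 :> R[i].
Proof. by rewrite rmorphN rmorph1. Qed.
Lemma rc0 (R : realType) : (0 : R)%:C = 0 :> R[i].
Proof. exact: rmorph0. Qed.

Lemma L0 (R : realType) n (L : 'M[R[i]]_n -> 'M[R[i]]_n) : sa_linear L -> L 0 = 0.
Proof.
case=> _ hl; have := hl 0 0 0 0 (sa0 _ _) (sa0 _ _).
by rewrite rc0 !scale0r addr0.
Qed.

Lemma G0 (R : realType) n (L : 'M[R[i]]_n -> 'M[R[i]]_n) : sa_linear L -> Gimg L 0.
Proof. by move=> hL; exists 0; split; [exact: sa0| exact: L0]. Qed.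

Lemma GL (R : realType) n (L : 'M[R[i]]_n -> 'M[R[i]]_n) (A B : 'M[R[i]]_n) (a b : R) :
  sa_linear L -> Gimg L A -> Gimg L B -> Gimg L (a%:C *: A + b%:C *: B).
Proof.
move=> [h1 h2] [A' [sA <-]] [B' [sB <-]].
by exists (a%:C *: A' + b%:C *: B'); split; [exact: saL| exact: h2].
Qed.

Lemma GD (R : realType) n (L : 'M[R[i]]_n -> 'M[R[i]]_n) (A B : 'M[R[i]]_n) :
  sa_linear L -> Gimg L A -> Gimg L B -> Gimg L (A + B).
Proof. by move=> hL hA hB; have := GL 1 1 hL hA hB; rewrite rc1 !scale1r. Qed.

Lemma GB (R : realType) n (L : 'M[R[i]]_n -> 'M[R[i]]_n) (A B : 'M[R[i]]_n) :
  sa_linear L -> Gimg L A -> Gimg L B -> Gimg L (A - B).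
Proof. by move=> hL hA hB; have := GL 1 (-1) hL hA hB; rewrite rc1 rcN1 scale1r scaleN1r. Qed.

Lemma GZ (R : realType) n (L : 'M[R[i]]_n -> 'M[R[i]]_n) (A : 'M[R[i]]_n) (a : R) :
  sa_linear L -> Gimg L A -> Gimg L (a%:C *: A).
Proof.
by move=> hL hA; have := GL a 0 hL hA (G0 hL); rewrite rc0 scale0r addr0.
Qed.

Lemma Gsum (R : realType) n (L : 'M[R[i]]_n -> 'M[R[i]]_n) (I : finType) (P : pred I) F :
  sa_linear L -> (forall x, P x -> Gimg L (F x)) -> Gimg L (\sum_(x | P x) F x).
Proof.
move=> hL hF; apply: big_ind => //; [exact: G0 | by move=> x y; apply: GD].
Qed.

Lemma Gsa (R : realType) n (L : 'M[R[i]]_n -> 'M[R[i]]_n) B :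
  sa_linear L -> Gimg L B -> selfadj B.
Proof. by move=> [h1 _] [A [sA <-]]; exact: h1. Qed.


Lemma adjm_delta (R : realType) m n (i : 'I_m) (j : 'I_n) :
  adjm (delta_mx i j : 'M[R[i]]_(m,n)) = delta_mx j i.
Proof. by apply/matrixP=> r t; rewrite !mxE conjc_nat andbC. Qed.

Definition uvec (R : realType) n (i j : 'I_n) (a b : R[i]) : 'cV[R[i]]_n :=
  a *: delta_mx i 0 + b *: delta_mx j 0.

Lemma uu_formula (R : realType) n (i j : 'I_n) (a b : R[i]) :
  uvec i j a b *m adjm (uvec i j a b) =
  (a * conjc a) *: delta_mx i i + (a * conjc b) *: delta_mx i j
  + (b * conjc a) *: delta_mx j i + (b * conjc b) *: delta_mx j j.
Proof.
rewrite /uvec adjmD !adjmZ !adjm_delta mulmxDl !mulmxDr -!scalemxAl -!scalemxAr.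
by rewrite !mul_delta_mx !scalerA !addrA.
Qed.

Lemma uu_unit (R : realType) n (i j : 'I_n) (a b : R[i]) : i != j ->
  adjm (uvec i j a b) *m uvec i j a b = (conjc a * a + conjc b * b)%:M.
Proof.
move=> hij.
rewrite /uvec adjmD !adjmZ !adjm_delta mulmxDl !mulmxDr -!scalemxAl -!scalemxAr.
rewrite !mul_delta_mx !mul_delta_mx_0 // 1?eq_sym // !scaler0 addr0 add0r !scalerA.
apply/matrixP=> r t; rewrite !mxE !ord1 /=; ring.
Qed.

Lemma uvec0 (R : realType) n (i j r : 'I_n) (a b : R[i]) :
  r != i -> r != j -> uvec i j a b r 0 = 0.
Proof. by move=> hi hj; rewrite !mxE (negPf hi) (negPf hj) /=; ring. Qed.

Lemma Kstep (R : realType) n k (L : 'M[R[i]]_n -> 'M[R[i]]_n) (i j : 'I_n) (a b : R[i]) :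
  sa_linear L -> (forall P, proj_rank k P -> Gimg L P) -> (0 < k)%N -> (k < n)%N ->
  i != j -> conjc a * a + conjc b * b = 1 ->
  Gimg L (uvec i j a b *m adjm (uvec i j a b) - delta_mx i i).
Proof.
move=> hL hP k0 kn hij hab.
have [s [c0 [hc0 [hav hinj]]]] := exists_sigma hij k0 kn.
have P1 : proj_rank k (Pmat s c0 (uvec i j a b)).
  apply: proj_P.
  - by move=> x y _ _; exact: hinj.
  - by move=> c hc; have [h1 h2] := hav c hc; exact: uvec0.
  - by rewrite uu_unit // hab.
have P2 : proj_rank k (Pmat s c0 (uvec i j (1 : R[i]) 0)).
  apply: proj_P.
  - by move=> x y _ _; exact: hinj.
  - by move=> c hc; have [h1 h2] := hav c hc; exact: uvec0.
  - by rewrite uu_unit // conjc1 rmorph0 mul0r addr0 mulr1.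
have := GB hL (hP _ P1) (hP _ P2).
rewrite /Pmat opprD addrACA subrr add0r.
rewrite uu_formula [X in _ - X]uu_formula.
by rewrite rmorph1 rmorph0 !mulr0 !mul0r !scale0r !addr0 mulr1 scale1r.
Qed.


Lemma E1 (R : realType) n k (L : 'M[R[i]]_n -> 'M[R[i]]_n) (i j : 'I_n) :
  sa_linear L -> (forall P, proj_rank k P -> Gimg L P) -> (0 < k)%N -> (k < n)%N ->
  i != j -> Gimg L (delta_mx j j - delta_mx i i).
Proof.
move=> hL hP k0 kn hij.
have := Kstep (a := 0) (b := 1) hL hP k0 kn hij.
rewrite uu_formula rmorph0 rmorph1 !mulr0 !mul0r !scale0r !add0r mulr1 scale1r.
by apply.
Qed.

Lemma E2 (R : realType) n k (L : 'M[R[i]]_n -> 'M[R[i]]_n) (i : 'I_n) :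
  sa_linear L -> (forall P, proj_rank k P -> Gimg L P) -> (0 < k)%N -> (k < n)%N ->
  Gimg L (delta_mx i i).
Proof.
move=> hL hP k0 kn.
have [j hj] : exists j : 'I_n, i != j.
  have h0 : (0 < n)%N by lia.
  have h1 : (1 < n)%N by lia.
  case: (eqVneq i (Ordinal h0)) => [->|h]; last by exists (Ordinal h0).
  by exists (Ordinal h1).
have [s [c0 [hc0 [hav hinj]]]] := exists_sigma hj k0 kn.
have PD : proj_rank k (Pmat s c0 (uvec i j (1 : R[i]) 0)).
  apply: proj_P.
  - by move=> x y _ _; exact: hinj.
  - by move=> c hc; have [h1 h2] := hav c hc; exact: uvec0.
  - by rewrite uu_unit // rmorph1 rmorph0 mul0r addr0 mulr1.
have eD : Pmat s c0 (uvec i j (1 : R[i]) 0) = \sum_c delta_mx (s c) (s c).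
  rewrite /Pmat uu_formula rmorph1 rmorph0 !mulr0 !mul0r !scale0r !addr0 mulr1 scale1r.
  by rewrite [RHS](bigD1 c0) //= hc0 addrC.
have key : delta_mx i i = ((k%:R)^-1 : R)%:C *:
   (Pmat s c0 (uvec i j (1 : R[i]) 0) + \sum_c (delta_mx i i - delta_mx (s c) (s c))).
  rewrite eD sumrB sumr_const card_ord addrC subrK -scaler_nat scalerA.
  rewrite fmorphV rmorph_nat mulVf ?scale1r // pnatr_eq0; lia.
rewrite key; apply: GZ => //; apply: GD => //; first exact: hP.
apply: Gsum => // c _.
have [e|ne] := eqVneq (s c) i; first by rewrite e subrr; exact: G0.
exact: (E1 hL hP k0 kn ne).
Qed.


Lemma half_sqrt (R : realType) : exists s : R[i], conjc s = s /\ s * s = 2^-1.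
Proof.
exists (Num.sqrt (2^-1 : R))%:C; split; first exact: conjc_real.
rewrite -rmorphM -expr2 sqr_sqrtr ?invr_ge0 ?ler0n //.
by rewrite fmorphV rmorph_nat.
Qed.

Lemma two_neq0 (R : realType) : (2 : R[i]) != 0.
Proof. by rewrite pnatr_eq0. Qed.

Lemma E3 (R : realType) n k (L : 'M[R[i]]_n -> 'M[R[i]]_n) (i j : 'I_n) :
  sa_linear L -> (forall P, proj_rank k P -> Gimg L P) -> (0 < k)%N -> (k < n)%N ->
  i != j -> Gimg L (delta_mx i j + delta_mx j i).
Proof.
move=> hL hP k0 kn hij.
have [s [hs1 hs2]] := half_sqrt R.
have h2 := two_neq0 R.
have := Kstep (a := s) (b := s) hL hP k0 kn hij.
rewrite hs1 hs2 => /(_ _) hZ.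
have {hZ} hZ : Gimg L (uvec i j s s *m adjm (uvec i j s s) - delta_mx i i).
  by apply: hZ; field.
have hW : Gimg L (delta_mx i i - delta_mx j j).
  by apply: (E1 hL hP k0 kn); rewrite eq_sym.
have := GL 2 1 hL hZ hW.
rewrite uu_formula hs1 hs2 rmorph1 rmorph_nat.
congr Gimg; apply/matrixP => r t; rewrite !mxE; by field.
Qed.

Lemma E4 (R : realType) n k (L : 'M[R[i]]_n -> 'M[R[i]]_n) (i j : 'I_n) :
  sa_linear L -> (forall P, proj_rank k P -> Gimg L P) -> (0 < k)%N -> (k < n)%N ->
  i != j -> Gimg L ('i *: (delta_mx i j - delta_mx j i)).
Proof.
move=> hL hP k0 kn hij.
have [s [hs1 hs2]] := half_sqrt R.
have h2 := two_neq0 R.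
have hb : conjc ('i * s) = - 'i * s by rewrite conjcM' conjc_i hs1.
have e1 : s * conjc s = 2^-1 by rewrite hs1.
have e2 : s * conjc ('i * s) = - 'i * 2^-1.
  by rewrite hb -hs2; ring.
have e3 : ('i * s) * conjc s = 'i * 2^-1.
  by rewrite hs1 -hs2; ring.
have e4 : ('i * s) * conjc ('i * s) = 2^-1.
  rewrite hb -hs2.
  have -> : 'i * s * (- 'i * s) = - ('i * 'i) * (s * s) by ring.
  by rewrite i2 opprK mul1r.
have hZ : Gimg L (uvec i j s ('i * s) *m adjm (uvec i j s ('i * s)) - delta_mx i i).
  apply: (Kstep hL hP k0 kn hij).
  rewrite mulrC e1 mulrC e4; by field.
have hW : Gimg L (delta_mx i i - delta_mx j j).
  by apply: (E1 hL hP k0 kn); rewrite eq_sym.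
have := GL (-2) (-1) hL hZ hW.
rewrite uu_formula e1 e2 e3 e4 !rmorphN rmorph1 rmorph_nat.
congr Gimg; apply/matrixP => r t; rewrite !mxE; by field.
Qed.


Lemma span_all (R : realType) n k (L : 'M[R[i]]_n -> 'M[R[i]]_n) :
  sa_linear L -> (forall P, proj_rank k P -> Gimg L P) -> (0 < k)%N -> (k < n)%N ->
  forall B, selfadj B -> Gimg L B.
Proof.
move=> hL hP k0 kn B hB.
pose X (i j : 'I_n) : 'M[R[i]]_n := delta_mx i j + delta_mx j i.
pose Y (i j : 'I_n) : 'M[R[i]]_n := 'i%C *: (delta_mx i j - delta_mx j i).
have hX i j : Gimg L (X i j).
  case: (eqVneq i j) => [<-|ne]; last exact: (E3 hL hP k0 kn ne).
  by apply: GD => //; exact: (E2 _ hL hP k0 kn).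
have hY i j : Gimg L (Y i j).
  case: (eqVneq i j) => [<-|ne]; last exact: (E4 hL hP k0 kn ne).
  by rewrite /Y subrr scaler0; exact: G0.
have hBji i j : B j i = conjc (B i j).
  by move: hB; rewrite /selfadj => /matrixP /(_ j i); rewrite !mxE => <-.
have eB : B = \sum_i \sum_j (((complex.Re (B i j) / 2 : R)%:C : R[i]) *: X i j + ((complex.Im (B i j) / 2 : R)%:C : R[i]) *: Y i j).
  rewrite (_ : \sum_i \sum_j _ = \sum_i \sum_j 2^-1 *: (B i j *: delta_mx i j + B j i *: delta_mx j i)); last first.
    apply: eq_bigr => i _; apply: eq_bigr => j _.
    have eb := complexE (B i j).
    rewrite (hBji i j).
    move: eb; set x := complex.Re _; set y := complex.Im _ => eb.
    rewrite eb.
    rewrite conjcD' conjcM' conjc_i !conjc_real.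
    rewrite !rc_half.
    clearbody x y; apply/matrixP => r t; rewrite !mxE; ring.
  under eq_bigr do rewrite -scaler_sumr big_split /=.
  rewrite -scaler_sumr big_split /= -matrix_sum_delta exchange_big /= -matrix_sum_delta.
  have h2 : (2^-1 + 2^-1 : R[i]) = 1 by have := two_neq0 R; move=> ?; field.
  by rewrite scalerDr -scalerDl h2 scale1r.
rewrite eB; apply: Gsum => // i _; apply: Gsum => // j _.
by apply: GL.
Qed.


Lemma saE (R : realType) n (A : 'M[R[i]]_n) : selfadj A <-> adjm A = A.
Proof. by []. Qed.

Lemma Ladd (R : realType) n (L : 'M[R[i]]_n -> 'M[R[i]]_n) X Y :
  sa_linear L -> selfadj X -> selfadj Y -> L (X + Y) = L X + L Y.
Proof. by case=> _ h sX sY; have := h 1 1 X Y sX sY; rewrite rc1 !scale1r. Qed.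

Lemma Lscale (R : realType) n (L : 'M[R[i]]_n -> 'M[R[i]]_n) X (a : R) :
  sa_linear L -> selfadj X -> L (a%:C *: X) = a%:C *: L X.
Proof.
move=> hL sX; have := hL.2 a 0 X 0 sX (sa0 _ _).
by rewrite rc0 !scale0r !addr0.
Qed.

Lemma Lopp (R : realType) n (L : 'M[R[i]]_n -> 'M[R[i]]_n) X :
  sa_linear L -> selfadj X -> L (- X) = - L X.
Proof. by move=> hL sX; have := Lscale (-1) hL sX; rewrite rcN1 !scaleN1r. Qed.

Lemma saD (R : realType) n (A B : 'M[R[i]]_n) : selfadj A -> selfadj B -> selfadj (A + B).
Proof. by move=> hA hB; have := saL 1 1 hA hB; rewrite rc1 !scale1r. Qed.
Lemma saZ (R : realType) n (A : 'M[R[i]]_n) (a : R) : selfadj A -> selfadj (a%:C *: A).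
Proof. by move=> hA; have := saL a 0 hA (sa0 _ _); rewrite rc0 scale0r addr0. Qed.
Lemma saN (R : realType) n (A : 'M[R[i]]_n) : selfadj A -> selfadj (- A).
Proof. by move=> hA; have := saZ (-1) hA; rewrite rcN1 scaleN1r. Qed.

Definition hpart (R : realType) n (A : 'M[R[i]]_n) := 2^-1 *: (A + adjm A).
Definition kpart (R : realType) n (A : 'M[R[i]]_n) := (- 'i%C / 2) *: (A - adjm A).

Lemma conj_half (R : realType) : conjc (2^-1 : R[i]) = 2^-1.
Proof. by rewrite conjc_inv conjc_nat. Qed.

Lemma hpart_sa (R : realType) n (A : 'M[R[i]]_n) : selfadj (hpart A).
Proof. by apply/saE; rewrite /hpart adjmZ adjmD adjmK conj_half addrC. Qed.

Lemma kpart_sa (R : realType) n (A : 'M[R[i]]_n) : selfadj (kpart A).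
Proof.
apply/saE; rewrite /kpart adjmZ adjmD adjmN adjmK conjcM' conjc_inv conjc_nat.
rewrite conjcN' conjc_i opprK.
by rewrite -opprB scalerN -scaleNr mulNr.
Qed.

Lemma two_half (R : realType) : (2^-1 + 2^-1 : R[i]) = 1.
Proof. by have := two_neq0 R; move=> ?; field. Qed.

Lemma hk_dec (R : realType) n (A : 'M[R[i]]_n) : A = hpart A + 'i%C *: kpart A.
Proof.
rewrite /hpart /kpart scalerA.
have -> : 'i%C * (- 'i%C / 2) = 2^-1 :> R[i].
  by rewrite mulrA mulrN i2 opprK mul1r.
rewrite -scalerDr addrACA subrr addr0.
by rewrite scalerDr -scalerDl two_half scale1r.
Qed.

Lemma hpart_dec (R : realType) n (X Y : 'M[R[i]]_n) :
  selfadj X -> selfadj Y -> hpart (X + 'i%C *: Y) = X.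
Proof.
move=> /saE hX /saE hY; rewrite /hpart adjmD adjmZ hX hY conjc_i.
apply/matrixP => r t; rewrite !mxE; have := two_neq0 R; move=> ?; by field.
Qed.

Lemma kpart_dec (R : realType) n (X Y : 'M[R[i]]_n) :
  selfadj X -> selfadj Y -> kpart (X + 'i%C *: Y) = Y.
Proof.
move=> /saE hX /saE hY; rewrite /kpart adjmD adjmZ hX hY conjc_i.
have e : (- 'i%C / 2) * ('i%C * 2) = 1 :> R[i].
  have := two_neq0 R => h2.
  have -> : (- 'i%C / 2) * ('i%C * 2) = - ('i%C * 'i%C) * (2 / 2) :> R[i] by ring.
  by rewrite i2 opprK mul1r divff.
apply/matrixP => r t; rewrite !mxE.
set y := Y r t.
transitivity ((- 'i%C / 2) * ('i%C * 2) * y); first by ring.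
by rewrite e mul1r.
Qed.

Lemma hpartD (R : realType) n (A B : 'M[R[i]]_n) : hpart (A + B) = hpart A + hpart B.
Proof. by rewrite /hpart adjmD -scalerDr addrACA. Qed.
Lemma kpartD (R : realType) n (A B : 'M[R[i]]_n) : kpart (A + B) = kpart A + kpart B.
Proof. by rewrite /kpart adjmD -scalerDr opprD addrACA. Qed.
Lemma hpartZ (R : realType) n (A : 'M[R[i]]_n) (a : R) : hpart (a%:C *: A) = a%:C *: hpart A.
Proof. by rewrite /hpart adjmZ conjc_real -scalerDr !scalerA mulrC. Qed.
Lemma kpartZ (R : realType) n (A : 'M[R[i]]_n) (a : R) : kpart (a%:C *: A) = a%:C *: kpart A.
Proof. by rewrite /kpart adjmZ conjc_real -scalerBr !scalerA mulrC. Qed.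
Lemma hpartI (R : realType) n (A : 'M[R[i]]_n) : hpart ('i%C *: A) = - kpart A.
Proof.
rewrite /hpart /kpart adjmZ conjc_i.
apply/matrixP => r t; rewrite !mxE; ring.
Qed.
Lemma kpartI (R : realType) n (A : 'M[R[i]]_n) : kpart ('i%C *: A) = hpart A.
Proof.
rewrite /hpart /kpart adjmZ conjc_i.
apply/matrixP => r t; rewrite !mxE.
set a := A r t; set b := conjc (A t r).
transitivity (- ('i%C * 'i%C) * 2^-1 * (a + b)); first by ring.
by rewrite i2 opprK mul1r.
Qed.


Lemma surj_inj (F : fieldType) n (f : 'M[F]_n -> 'M[F]_n) :
  (forall c A B, f (c *: A + B) = c *: f A + f B) ->
  (forall Y, exists X, f X = Y) -> forall A B, f A = f B -> A = B.
Proof.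
move=> hlin hsurj.
have f0 : f 0 = 0.
  by have := hlin (-1) 0 0; rewrite scaler0 addr0 scaleN1r addNr.
have fD A B : f (A + B) = f A + f B by have := hlin 1 A B; rewrite !scale1r.
have fZ c A : f (c *: A) = c *: f A by have := hlin c A 0; rewrite !addr0 f0 addr0.
pose M : 'M[F]_(n * n) := \matrix_(r, c) mxvec (f (vec_mx (delta_mx 0 r))) 0 c.
have hM A : mxvec (f A) = mxvec A *m M.
  rewrite -{1}(mxvecK A) {1}(row_sum_delta (mxvec A)) linear_sum.
  rewrite (big_morph f fD f0) linear_sum [in RHS](row_sum_delta (mxvec A)) mulmx_suml.
  apply: eq_bigr => r _; rewrite linearZ fZ linearZ -scalemxAl; congr (_ *: _).
  by rewrite -rowE; apply/rowP => c; rewrite !mxE.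
have uM : M \in unitmx.
  rewrite -row_full_unit -sub1mx; apply/row_subP => r; rewrite row1.
  have [A hA] := hsurj (vec_mx (delta_mx 0 r)).
  by rewrite -[delta_mx 0 r]vec_mxK -hA hM submxMl.
move=> A B /(congr1 mxvec); rewrite !hM => /(congr1 (mulmx^~ (invmx M))).
by rewrite !mulmxK // => /(can_inj mxvecK).
Qed.


Definition fC (R : realType) n (L : 'M[R[i]]_n -> 'M[R[i]]_n) (A : 'M[R[i]]_n) :=
  L (hpart A) + 'i%C *: L (kpart A).

Lemma fC_lin (R : realType) n (L : 'M[R[i]]_n -> 'M[R[i]]_n) :
  sa_linear L -> forall c A B, fC L (c *: A + B) = c *: fC L A + fC L B.
Proof.
move=> hL.
have fD A B : fC L (A + B) = fC L A + fC L B.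
  rewrite /fC hpartD kpartD !(Ladd hL (hpart_sa _) (hpart_sa _)) (Ladd hL (kpart_sa _) (kpart_sa _)).
  by rewrite scalerDr addrACA.
have fZ (a : R) A : fC L (a%:C *: A) = a%:C *: fC L A.
  rewrite /fC hpartZ kpartZ (Lscale a hL (hpart_sa _)) (Lscale a hL (kpart_sa _)).
  by rewrite scalerDr !scalerA mulrC.
have fI A : fC L ('i%C *: A) = 'i%C *: fC L A.
  rewrite /fC hpartI kpartI (Lopp hL (kpart_sa _)).
  by rewrite scalerDr scalerA i2 scaleN1r addrC.
move=> c A B; rewrite fD; congr (_ + _).
rewrite [c]complexE scalerDl -scalerA fD fZ fI fZ.
by rewrite scalerDl scalerA.
Qed.

Lemma fC_sa (R : realType) n (L : 'M[R[i]]_n -> 'M[R[i]]_n) A :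
  sa_linear L -> selfadj A -> fC L A = L A.
Proof.
move=> hL hA.
have e1 := hpart_dec hA (sa0 R n); have e2 := kpart_dec hA (sa0 R n).
rewrite scaler0 addr0 in e1 e2.
by rewrite /fC e1 e2 L0 // scaler0 addr0.
Qed.

Unset Implicit Arguments.
Local Close Scope complex_scope.

Theorem lemma2 (R : realType) (n k : nat) (L : 'M[R[i]]_n -> 'M[R[i]]_n) :
  (2 <= n)%N -> (1 <= k)%N -> (k < n)%N ->
  sa_linear L ->
  (forall P, proj_rank k P -> proj_rank k (L P)) ->
  (forall Q, proj_rank k Q -> exists P, proj_rank k P /\ L P = Q) ->
  (forall A B, selfadj A -> selfadj B -> L A = L B -> A = B) /\
  (forall B, selfadj B -> exists A, selfadj A /\ L A = B).
Proof.
move=> n2 k1 kn hL _ hQ.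
have hG : forall P, proj_rank k P -> Gimg L P.
  by move=> P /hQ [P' [[sP' _] eP']]; exists P'.
have hspan := span_all hL hG k1 kn.
split; last exact: hspan.
move=> A B hA hB eAB.
apply: (surj_inj (fC_lin hL)); last by rewrite (fC_sa hL hA) (fC_sa hL hB).
move=> Y.
have [A1 [s1 e1]] := hspan _ (hpart_sa Y).
have [A2 [s2 e2]] := hspan _ (kpart_sa Y).
exists (A1 + 'i%C *: A2).
by rewrite /fC hpart_dec // kpart_dec // e1 e2 -hk_dec.
Qed.
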